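(* Let $\phi$ be the real root of $x^3=x^2+x+1$. For any positive integers $n,k$ with $k\ge 4$, the number of positive tribonacci sequences of length $k$ terminating at $n$ is at most \[\left\lceil 1500\frac{n}{\phi^{3k/2}}\right\rceil^2.\]
   Context: A tribonacci sequence of length $k$ is a sequence of integers $\langle a_i\rangle_{i=1}^k$ such that $a_i=a_{i-1}+a_{i-2}+a_{i-3}$ for all $4\le i\le k$. It terminates at $a_k$, and it is positive if $a_1,a_2,a_3>0$. *)

(* Defs.v *)
From HB Require Import structures.
From mathcomp Require Import all_boot all_order all_algebra.
From mathcomp Require Import reals.
Set Implicit Arguments. Unset Strict Implicit. Unset Printing Implicit Defensive.
Import Order.TTheory GRing.Theory Num.Theory.
Local Open Scope ring_scope.

(* A sequence <a_1,...,a_k> is represented as s : seq int of size k,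
   with a_i = s`_(i-1) (0-indexed). *)

Definition is_tribonacci (k : nat) (s : seq int) : Prop :=
  size s = k /\
  forall i : nat, (3 <= i)%N -> (i < k)%N ->
    s`_i = s`_(i - 1) + s`_(i - 2) + s`_(i - 3).

Definition is_positive_seq (s : seq int) : Prop :=
  0 < s`_0 /\ 0 < s`_1 /\ 0 < s`_2.

Definition terminates_at (k : nat) (n : int) (s : seq int) : Prop :=
  s`_(k.-1) = n.

Definition pos_trib_ending (k : nat) (n : int) (s : seq int) : Prop :=
  is_tribonacci k s /\ is_positive_seq s /\ terminates_at k n s.

(* Main.v *)
From HB Require Import structures.
From mathcomp Require Import all_boot all_order all_algebra.
From mathcomp Require Import reals.
Require Import Defs.
From mathcomp Require Import ring lra zify.
Set Implicit Arguments. Unset Strict Implicit. Unset Printing Implicit Defensive.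
Import Order.TTheory GRing.Theory Num.Theory.
Local Open Scope ring_scope.

Fixpoint trS (n : nat) (x y z : int) : int :=
  match n with 0%N => x | n'.+1 => trS n' y z (x + y + z) end.

Lemma trS_rec n x y z : trS n.+3 x y z = trS n x y z + trS n.+1 x y z + trS n.+2 x y z.
Proof.
elim: n x y z => [|n IH] x y z //.
exact: (IH y z (x + y + z)).
Qed.

Lemma trS_lin n x y z :
  trS n x y z = x * trS n 1 0 0 + y * trS n 0 1 0 + z * trS n 0 0 1.
Proof.
elim: n x y z => [|n IH] x y z /=.
  by ring.
rewrite IH (IH 0 0 1) (IH 1 0 1) (IH 0 1 1).
ring.
Qed.

Lemma trS_ge0 n x y z : 0 <= x -> 0 <= y -> 0 <= z -> 0 <= trS n x y z.
Proof.
elim: n x y z => [|n IH] x y z hx hy hz //=.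
apply: IH => //; lia.
Qed.

Lemma trS_gt0 n x y z : 0 < x -> 0 < y -> 0 < z -> 0 < trS n x y z.
Proof.
elim: n x y z => [|n IH] x y z hx hy hz //=.
apply: IH => //; lia.
Qed.

Lemma coef_mono n : (2 <= n)%N ->
  [/\ 0 <= trS n 1 0 0, trS n 1 0 0 <= trS n 0 1 0, 0 < trS n 0 0 1 &
      (3 <= n)%N -> trS n 0 1 0 <= trS n 0 0 1].
Proof.
case: n => [|[|n]] // _.
split.
- by apply: trS_ge0.
- rewrite -subr_ge0.
  have -> : trS n.+2 0 1 0 - trS n.+2 1 0 0 = trS n.+2 (-1) 1 0.
    by rewrite (trS_lin n.+2 (-1)); ring.
  by rewrite /=; apply: trS_ge0.
- by rewrite /=; apply: trS_gt0.
- case: n => [|n] // _.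
  rewrite -subr_ge0.
  have -> : trS n.+3 0 0 1 - trS n.+3 0 1 0 = trS n.+3 0 (-1) 1.
    by rewrite (trS_lin n.+3 0 (-1)); ring.
  by rewrite /=; apply: trS_ge0.
Qed.
Definition Fz (x y z : int) : int := x^+3 + x^+2*z + 2*x^+2*y - 2*x*y*z + 2*x*y^+2
  - x*z^+2 - 2*y*z^+2 + 2*y^+3 + z^+3.

Lemma Fz_shift a b c r1 r2 r3 : Fz (a*3+r1) (b*3+r2) (c*3+r3) = Fz r1 r2 r3 + 3 * ((3)*c*r3^+2 + (-4)*c*r2*r3 + (-2)*c*r1*r3 + (-2)*c*r1*r2 + (1)*c*r1^+2 + (9)*c^+2*r3 + (-6)*c^+2*r2 + (-3)*c^+2*r1 + (9)*c^+3 + (-2)*b*r3^+2 + (6)*b*r2^+2 + (-2)*b*r1*r3 + (4)*b*r1*r2 + (2)*b*r1^+2 + (-12)*b*c*r3 + (-6)*b*c*r1 + (-18)*b*c^+2 + (18)*b^+2*r2 + (6)*b^+2*r1 + (18)*b^+3 + (-1)*a*r3^+2 + (-2)*a*r2*r3 + (2)*a*r2^+2 + (2)*a*r1*r3 + (4)*a*r1*r2 + (3)*a*r1^+2 + (-6)*a*c*r3 + (-6)*a*c*r2 + (6)*a*c*r1 + (-9)*a*c^+2 + (-6)*a*b*r3 + (12)*a*b*r2 + (12)*a*b*r1 + (-18)*a*b*c + (18)*a*b^+2 + (3)*a^+2*r3 + (6)*a^+2*r2 + (9)*a^+2*r1 + (9)*a^+2*c + (18)*a^+2*b + (9)*a^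+3).
Proof. rewrite /Fz; ring. Qed.

Lemma Fz_shift' a b c r1 r2 r3 : (3 %| Fz (a*3+r1) (b*3+r2) (c*3+r3) - Fz r1 r2 r3)%Z.
Proof.
have -> : Fz (a*3+r1) (b*3+r2) (c*3+r3) - Fz r1 r2 r3 = 3 * ((3)*c*r3^+2 + (-4)*c*r2*r3 + (-2)*c*r1*r3 + (-2)*c*r1*r2 + (1)*c*r1^+2 + (9)*c^+2*r3 + (-6)*c^+2*r2 + (-3)*c^+2*r1 + (9)*c^+3 + (-2)*b*r3^+2 + (6)*b*r2^+2 + (-2)*b*r1*r3 + (4)*b*r1*r2 + (2)*b*r1^+2 + (-12)*b*c*r3 + (-6)*b*c*r1 + (-18)*b*c^+2 + (18)*b^+2*r2 + (6)*b^+2*r1 + (18)*b^+3 + (-1)*a*r3^+2 + (-2)*a*r2*r3 + (2)*a*r2^+2 + (2)*a*r1*r3 + (4)*a*r1*r2 + (3)*a*r1^+2 + (-6)*a*c*r3 + (-6)*a*c*r2 + (6)*a*c*r1 + (-9)*a*c^+2 + (-6)*a*b*r3 + (12)*a*b*r2 + (12)*a*b*r1 + (-18)*a*b*c + (18)*a*b^+2 + (3)*a^+2*r3 + (6)*a^+2*r2 + (9)*a^+2*r1 + (9)*a^+2*c + (18)*a^+2*b + (9)*a^+3) by rewrite /Fz; ring.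
exact: dvdz_mulr.
Qed.

Lemma Fz_res r1 r2 r3 : 0 <= r1 < 3 -> 0 <= r2 < 3 -> 0 <= r3 < 3 ->
  (3 %| Fz r1 r2 r3)%Z -> [/\ r1 = 0, r2 = 0 & r3 = 0].
Proof.
move=> h1 h2 h3.
have : r1 = 0 \/ r1 = 1 \/ r1 = 2 by lia.
have : r2 = 0 \/ r2 = 1 \/ r2 = 2 by lia.
have : r3 = 0 \/ r3 = 1 \/ r3 = 2 by lia.
by do 3 (case=> [->|[->|->]]); vm_compute.
Qed.

Lemma Fz_eq0_aux N x y z : (`|x| + `|y| + `|z| <= N)%N -> Fz x y z = 0 ->
  [/\ x = 0, y = 0 & z = 0].
Proof.
elim: N x y z => [|N IH] x y z hN hF.
  by split; lia.
have ex := divz_eq x 3; have ey := divz_eq y 3; have ez := divz_eq z 3.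
move: ex ey ez.
move: (x %/ 3)%Z (y %/ 3)%Z (z %/ 3)%Z => a b c.
have hr : forall t : int, 0 <= (t %% 3)%Z < 3.
  by move=> t; rewrite modz_ge0 // ltz_pmod.
move: (hr x) (hr y) (hr z).
move: (x %% 3)%Z (y %% 3)%Z (z %% 3)%Z => r1 r2 r3 h1 h2 h3 ex ey ez.
have hd : (3 %| Fz r1 r2 r3)%Z.
  have h := Fz_shift' a b c r1 r2 r3; rewrite -ex -ey -ez hF sub0r dvdzE abszN in h.
  exact: h.
have [e1 e2 e3] := Fz_res h1 h2 h3 hd.
rewrite e1 addr0 in ex; rewrite e2 addr0 in ey; rewrite e3 addr0 in ez.
have h27 : Fz x y z = 27 * Fz a b c by rewrite ex ey ez /Fz; ring.
have hF' : Fz a b c = 0.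
  by move: hF; rewrite h27 => /eqP; rewrite mulf_eq0 => /orP[] /eqP.
have hN' : (`|a| + `|b| + `|c| <= N)%N by lia.
have [ea eb ec] := IH a b c hN' hF'.
by rewrite ex ey ez ea eb ec !mul0r.
Qed.

Lemma Fz_eq0 x y z : Fz x y z = 0 -> [/\ x = 0, y = 0 & z = 0].
Proof. exact: (@Fz_eq0_aux _ x y z (leqnn _)). Qed.

Lemma seq_trS k s : is_tribonacci k s -> forall i, (i < k)%N -> s`_i = trS i s`_0 s`_1 s`_2.
Proof.
move=> [hs hrec] i; elim/ltn_ind: i => i IH hi.
case: i IH hi => [|[|[|i]]] IH hi //.
rewrite hrec // !subSS !subn0 trS_rec.
by rewrite -!IH //; lia.
Qed.

Lemma trS_sub n x y z x' y' z' :
  trS n (x - x') (y - y') (z - z') = trS n x y z - trS n x' y' z'.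
Proof. rewrite (trS_lin n (x - x')) (trS_lin n x) (trS_lin n x'); ring. Qed.

Section S.
Variable R : realType.
Variable phi : R.
Hypothesis hphi : phi ^+ 3 = phi ^+ 2 + phi + 1.

Lemma phi_gt1 : 1 < phi.
Proof.
rewrite ltNge; apply/negP => h.
have h2 : phi ^+ 2 * (phi - 1) <= 0 by rewrite mulr_ge0_le0 ?sqr_ge0 // subr_le0.
have h3 : phi <= -1 by move: h2 hphi; rewrite !exprS expr0; nra.
have h4 : phi * (phi ^+ 2 - 1) <= 0.
  rewrite mulr_le0_ge0 //; first lra.
  move: h3; rewrite expr2; nra.
move: h4 hphi; rewrite !exprS expr0; nra.
Qed.

Lemma phi_bounds : 183/100 <= phi <= 185/100.
Proof.
have h1 := phi_gt1.
move: hphi; rewrite !exprS expr0 => e.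
apply/andP; split; nra.
Qed.

Definition LL (x y z : R) := x + (phi^+2 - phi) * y + phi * z.
Definition QQ (x y z : R) := x^+2 + x*z + 2*x*y + y^+2 - z^+2
  + phi*(- x*z - z^+2 + x*y + 2*y^+2 + y*z) + phi^+2*(z^+2 - y*z - x*y - y^+2).
Definition FF (x y z : R) := x^+3 + x^+2*z + 2*x^+2*y - 2*x*y*z + 2*x*y^+2
  - x*z^+2 - 2*y*z^+2 + 2*y^+3 + z^+3.

Let E := phi^+3 - phi^+2 - phi - 1.
Lemma E0 : E = 0. Proof. by rewrite /E hphi; ring. Qed.

Lemma LL_step x y z : LL y z (x + y + z) = phi * LL x y z.
Proof.
apply/eqP; rewrite -subr_eq0; apply/eqP.
have -> : LL y z (x + y + z) - phi * LL x y z = E * (- y) by rewrite /E /LL; ring.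
by rewrite E0 mul0r.
Qed.

Lemma QQ_step x y z : phi * QQ y z (x + y + z) = QQ x y z.
Proof.
apply/eqP; rewrite -subr_eq0; apply/eqP.
have -> : phi * QQ y z (x + y + z) - QQ x y z = E * (- z^+2 + y^+2 + x*z + 2*x*y + x^+2)
  by rewrite /E /QQ; ring.
by rewrite E0 mul0r.
Qed.

Lemma FF_LQ x y z : FF x y z = LL x y z * QQ x y z.
Proof.
apply/eqP; rewrite eq_sym -subr_eq0; apply/eqP.
have -> : LL x y z * QQ x y z - FF x y z = E * (z^+3 - 2*y*z^+2 + y*z^+2*phi - y^+2*z*phi
   + 2*y^+3 - y^+3*phi - 2*x*y*z + x*y^+2 - x*y^+2*phi)
  by rewrite /E /QQ /LL /FF; ring.
by rewrite E0 mul0r.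
Qed.

Lemma QQ_lower x y : (x^+2 + y^+2) / 2 <= QQ x y 0.
Proof.
have /andP[p1 p2] := phi_bounds.
set d := 2 + phi - phi^+2.
set b := 1 + 2 * phi - phi^+2.
have -> : QQ x y 0 = x^+2 + d * x * y + b * y^+2 by rewrite /QQ /d /b; ring.
have hd : 0 <= d <= 6/10 by rewrite /d expr2; apply/andP; split; nra.
have hb : 12/10 <= b by rewrite /b expr2; nra.
case/andP: hd => hd1 hd2.
have h1 : 0 <= (x + d * y)^+2 by apply: sqr_ge0.
have h2 : 0 <= (b - 1/2 - d^+2 / 2) * y^+2.
  apply: mulr_ge0; last exact: sqr_ge0.
  rewrite expr2; nra.
move: h1 h2; rewrite !expr2; nra.
Qed.

Lemma LL_upper x y : (LL x y 0)^+2 <= 6 * (x^+2 + y^+2).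
Proof.
have /andP[p1 p2] := phi_bounds.
set g := phi^+2 - phi.
have hg : 0 <= g <= 17/10 by rewrite /g expr2; apply/andP; split; nra.
case/andP: hg => hg1 hg2.
have -> : LL x y 0 = x + g * y by rewrite /LL /g; ring.
have h1 : 0 <= (x - g * y)^+2 by apply: sqr_ge0.
have h2 : g^+2 * y^+2 <= 3 * y^+2.
  apply: ler_wpM2r; first exact: sqr_ge0. rewrite expr2; nra.
move: h1 h2; rewrite !expr2; nra.
Qed.

Lemma QQ_upper x y z : QQ x y z <= 4 * (x^+2 + y^+2 + z^+2).
Proof.
have /andP[p1 p2] := phi_bounds.
set b := 1 + 2 * phi - phi^+2.
set c := phi^+2 - phi - 1.
set d := 2 + phi - phi^+2.
set e := 1 - phi.
set f := phi - phi^+2.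
have -> : QQ x y z = x^+2 + b * y^+2 + c * z^+2 + d * x * y + e * x * z + f * y * z
  by rewrite /QQ /b /c /d /e /f; ring.
have hb : b <= 14/10 by rewrite /b expr2; nra.
have hc : 0 <= c <= 6/10 by rewrite /c expr2; apply/andP; split; nra.
have hd : 0 <= d <= 6/10 by rewrite /d expr2; apply/andP; split; nra.
have he : -1 <= e <= 0 by rewrite /e; apply/andP; split; nra.
have hf : -17/10 <= f <= 0 by rewrite /f expr2; apply/andP; split; nra.
case/andP: hc => hc1 hc2; case/andP: hd => hd1 hd2; case/andP: he => he1 he2;
case/andP: hf => hf1 hf2.
have t1 : b * y^+2 <= 14/10 * y^+2 by apply: ler_wpM2r; [exact: sqr_ge0|].
have t2 : c * z^+2 <= 6/10 * z^+2 by apply: ler_wpM2r; [exact: sqr_ge0|].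
have t3 : d * x * y <= d * (x^+2 + y^+2) / 2.
  have : 0 <= d * (x - y)^+2 by apply: mulr_ge0 => //; exact: sqr_ge0.
  rewrite !expr2; lra.
have t4 : e * x * z <= - e * (x^+2 + z^+2) / 2.
  have : 0 <= - e * (x + z)^+2 by apply: mulr_ge0; [lra| exact: sqr_ge0].
  rewrite !expr2; lra.
have t5 : f * y * z <= - f * (y^+2 + z^+2) / 2.
  have : 0 <= - f * (y + z)^+2 by apply: mulr_ge0; [lra| exact: sqr_ge0].
  rewrite !expr2; lra.
have s1 : d * (x^+2 + y^+2) <= 6/10 * (x^+2 + y^+2).
  apply: ler_wpM2r => //; apply: addr_ge0; exact: sqr_ge0.
have s2 : - e * (x^+2 + z^+2) <= 1 * (x^+2 + z^+2).
  apply: ler_wpM2r => //; [apply: addr_ge0; exact: sqr_ge0| lra].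
have s3 : - f * (y^+2 + z^+2) <= 17/10 * (y^+2 + z^+2).
  apply: ler_wpM2r => //; [apply: addr_ge0; exact: sqr_ge0| lra].
have : 0 <= x^+2 by exact: sqr_ge0.
have : 0 <= y^+2 by exact: sqr_ge0.
have : 0 <= z^+2 by exact: sqr_ge0.
lra.
Qed.


Notation "x '%:RR'" := (x%:~R : R) (at level 2, format "x '%:RR'").

Lemma FF_int x y z : (Fz x y z)%:RR = FF x%:RR y%:RR z%:RR.
Proof.
rewrite /Fz /FF.
by rewrite !(intrD, intrM, intrB, rmorphXn, intrN).
Qed.

Lemma LL_state j x y z :
  LL (trS j x y z)%:RR (trS j.+1 x y z)%:RR (trS j.+2 x y z)%:RR = phi ^+ j * LL x%:RR y%:RR z%:RR.
Proof.
elim: j x y z => [|j IH] x y z; first by rewrite expr0 mul1r.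
rewrite [trS j.+1 x y z]/= [trS j.+2 x y z]/= [trS j.+3 x y z]/=.
rewrite -/(trS j.+1 y z (x + y + z)) -/(trS j.+2 y z (x + y + z)).
by rewrite IH !intrD LL_step exprSr mulrA.
Qed.

Lemma QQ_state j x y z :
  phi ^+ j * QQ (trS j x y z)%:RR (trS j.+1 x y z)%:RR (trS j.+2 x y z)%:RR = QQ x%:RR y%:RR z%:RR.
Proof.
elim: j x y z => [|j IH] x y z; first by rewrite expr0 mul1r.
rewrite [trS j.+1 x y z]/= [trS j.+2 x y z]/= [trS j.+3 x y z]/=.
rewrite -/(trS j.+1 y z (x + y + z)) -/(trS j.+2 y z (x + y + z)).
by rewrite exprSr -mulrA (mulrC phi) mulrA IH !intrD mulrC QQ_step.
Qed.

Lemma key j x y z : ~~ [&& x == 0, y == 0 & z == 0] -> trS j.+2 x y z = 0 ->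
  phi ^+ (3 * j) <= 12 * (QQ x%:RR y%:RR z%:RR) ^+ 3.
Proof.
move=> hnz h0.
have hF : 1 <= (FF x%:RR y%:RR z%:RR) ^+ 2.
  rewrite -FF_int -rmorphXn /= ler1z.
  have : Fz x y z != 0.
    apply/negP => /eqP /Fz_eq0 [ex ey ez]; move: hnz; by rewrite ex ey ez !eqxx.
  move: (Fz x y z) => f hf; rewrite expr2; nia.
set p := (trS j x y z)%:RR; set q := (trS j.+1 x y z)%:RR.
have hL := LL_state j x y z; have hQ := QQ_state j x y z.
rewrite h0 -/p -/q mulr0z in hL hQ.
set P := phi ^+ j in hL hQ.
set lv := LL x%:RR _ _ in hL; set qv := QQ x%:RR _ _ in hQ *.
have hFv : FF x%:RR y%:RR z%:RR = lv * qv by rewrite FF_LQ.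
have hP : 0 < P by rewrite /P exprn_gt0 // (lt_trans _ (phi_gt1)).
have hA := LL_upper p q.
have hB := QQ_lower p q.
have hqv : 0 <= qv.
  rewrite -hQ; apply: mulr_ge0; first exact: ltW.
  by apply: le_trans hB; rewrite divr_ge0 // addr_ge0 // sqr_ge0.
have e3 : phi ^+ (3 * j) = P ^+ 3 by rewrite /P mulnC exprM.
rewrite e3.
have s1 : P^+2 * (FF x%:RR y%:RR z%:RR)^+2 <= 12 * (QQ p q 0) * qv^+2.
  rewrite hFv exprMn mulrA -exprMn -hL.
  apply: (le_trans (ler_wpM2r _ hA)); first exact: sqr_ge0.
  apply: ler_wpM2r; first exact: sqr_ge0.
  lra.
have s2 : P^+3 * (FF x%:RR y%:RR z%:RR)^+2 <= 12 * qv^+3.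
  have h := ler_wpM2r (ltW hP) s1.
  have e1 : P^+3 * (FF x%:RR y%:RR z%:RR)^+2 = P^+2 * (FF x%:RR y%:RR z%:RR)^+2 * P by ring.
  have e2 : 12 * QQ p q 0 * qv^+2 * P = 12 * qv^+3 by rewrite -hQ; ring.
  by rewrite e1 -e2.
apply: le_trans s2.
rewrite -{1}[P^+3]mulr1; apply: ler_wpM2l => //.
by rewrite exprn_ge0 // ltW.
Qed.

Lemma abs_z_bound j x y z : trS j.+3 x y z = 0 -> `|z| <= `|x| + `|y|.
Proof.
move=> h0.
have [c1p c12 c3p c23] := coef_mono (isT : (2 <= j.+3)%N).
have {c23} c23 := c23 isT.
move: h0; rewrite trS_lin.
move: (trS j.+3 1 0 0) (trS j.+3 0 1 0) (trS j.+3 0 0 1) c1p c12 c3p c23 => c1 c2 c3 h1 h2 h3 h4 e.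
have ez : z * c3 = - (x * c1 + y * c2) by apply/eqP; rewrite -addr_eq0 addrC e.
have : `|z| * c3 <= (`|x| + `|y|) * c3.
  rewrite -[c3 in `|z| * c3](gtr0_norm h3) -normrM ez normrN.
  apply: (le_trans (ler_normD _ _)).
  rewrite !normrM (ger0_norm h1) (ger0_norm (le_trans h1 h2)) mulrDl.
  apply: lerD; apply: ler_wpM2l => //; [exact: (le_trans h2 h4)].
by rewrite ler_pM2r.
Qed.

Lemma close_bound j x y z (d : R) : trS j.+3 x y z = 0 ->
  ~~ [&& x == 0, y == 0 & z == 0] ->
  `|x%:RR| <= d -> `|y%:RR| <= d -> phi ^+ (3 * j.+1) <= 12 * (24 * d ^+ 2) ^+ 3.
Proof.
move=> h0 hnz hx hy.
have hk := key hnz h0.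
have hz : `|z%:RR| <= 2 * d.
  rewrite -intr_norm.
  apply: (le_trans (y := (`|x| + `|y|)%:~R)); first by rewrite ler_int (abs_z_bound h0).
  by rewrite intrD !intr_norm; lra.
set Q := QQ _ _ _ in hk.
have hQ : Q <= 24 * d^+2.
  apply: (le_trans (QQ_upper _ _ _)).
  have sq : forall (a : R) b, `|a| <= b -> a ^+ 2 <= b ^+ 2.
    move=> a b hab; rewrite -real_normK ?num_real //.
    by apply: lerXn2r => //; rewrite nnegrE // (le_trans _ hab).
  have := sq _ _ hx; have := sq _ _ hy; have := sq _ _ hz.
  rewrite !expr2; lra.
have hP : 0 < phi ^+ (3 * j.+1) by rewrite exprn_gt0 // (lt_trans _ (phi_gt1)).
have hQ0 : 0 <= Q.
  rewrite leNgt; apply/negP => hneg.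
  have : Q ^+ 3 <= 0 by rewrite !exprS expr0 mulr1; nra.
  lra.
apply: (le_trans hk); rewrite ler_pM2l //.
by apply: lerXn2r => //; rewrite nnegrE // (le_trans hQ0 hQ).
Qed.

Lemma final_contra j (d : R) : 0 <= d ->
  d ^+ 2 * 1500 ^+ 2 <= (1 + phi ^+ 2) ^+ 2 * phi ^+ j * phi ^+ 9 ->
  phi ^+ (3 * j) <= 12 * (24 * d ^+ 2) ^+ 3 -> False.
Proof.
move=> hd h1 h2.
have /andP[p1 p2] := phi_bounds.
set T := phi ^+ j in h1.
have hT : 0 < T by rewrite exprn_gt0 // (lt_trans _ (phi_gt1)).
have e3 : phi ^+ (3 * j) = T ^+ 3 by rewrite /T mulnC exprM.
rewrite e3 in h2.
have hc : (1 + phi ^+ 2) ^+ 2 <= 25.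
  have : (1 + phi^+2) <= 5 by rewrite expr2; nra.
  move=> h; rewrite expr2; have : 0 <= 1 + phi^+2 by rewrite addr_ge0 // sqr_ge0.
  nra.
have h9 : phi ^+ 9 <= 2 ^+ 9.
  by apply: lerXn2r; rewrite ?nnegrE //; lra.
have h1' : d ^+ 2 * 1500 ^+ 2 <= 25 * T * 2 ^+ 9.
  have hT0 := ltW hT.
  have hp9 : 0 <= phi ^+ 9 by rewrite exprn_ge0 // ltW // (lt_trans _ phi_gt1).
  have a1 := ler_wpM2r hT0 hc.
  have a2 := ler_wpM2r hp9 a1.
  have a3 : 25 * T * phi ^+ 9 <= 25 * T * 2 ^+ 9 by apply: ler_wpM2l => //; rewrite mulr_ge0.
  exact: (le_trans h1 (le_trans a2 a3)).
have h3 : (d ^+ 2 * 1500 ^+ 2) ^+ 3 <= (25 * T * 2 ^+ 9) ^+ 3.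
  have n1 : 0 <= d ^+ 2 * 1500 ^+ 2 by rewrite mulr_ge0 // sqr_ge0.
  apply: lerXn2r => //; rewrite nnegrE //; exact: (le_trans n1 h1').
have : T ^+ 3 * 1500 ^+ 6 <= 12 * 24 ^+ 3 * 25 ^+ 3 * 2 ^+ 27 * T ^+ 3.
  have e1 : 12 * 24 ^+ 3 * 25 ^+ 3 * 2 ^+ 27 * T ^+ 3 = 12 * 24 ^+ 3 * (25 * T * 2 ^+ 9) ^+ 3 by ring.
  rewrite e1.
  apply: (le_trans (y := 12 * (24 * d ^+ 2) ^+ 3 * 1500 ^+ 6)).
    by apply: ler_wpM2r => //; rewrite exprn_ge0.
  have e4 : 12 * (24 * d ^+ 2) ^+ 3 * 1500 ^+ 6 = 12 * 24 ^+ 3 * (d ^+ 2 * 1500 ^+ 2) ^+ 3 by ring.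
  rewrite e4; apply: ler_wpM2l => //; by rewrite mulr_ge0 // exprn_ge0.
have hT3 : 0 < T ^+ 3 by rewrite exprn_gt0.
move: hT3; set U := T ^+ 3 => hU.
move=> h; nra.
Qed.

Lemma abound j x y z (N : int) : 0 < x -> 0 < y -> 0 < z -> trS j.+3 x y z = N ->
  x%:RR * phi ^+ j.+1 <= (1 + phi ^+ 2) * N%:RR /\ y%:RR * phi ^+ j.+1 <= (1 + phi ^+ 2) * N%:RR.
Proof.
move=> hx hy hz hN.
have hL := LL_state j.+1 x y z.
have hp : 0 < trS j.+1 x y z by apply: trS_gt0.
have hq : 0 < trS j.+2 x y z by apply: trS_gt0.
have hp0 : 0 < trS j x y z by apply: trS_gt0.
have hNs : N = trS j x y z + trS j.+1 x y z + trS j.+2 x y z by rewrite -hN trS_rec.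
have hpN : (trS j.+1 x y z)%:RR <= N%:RR by rewrite ler_int hNs; lia.
have hqN : (trS j.+2 x y z)%:RR <= N%:RR by rewrite ler_int hNs; lia.
have hp' : 0 < (trS j.+1 x y z)%:RR by rewrite ltr0z.
have hq' : 0 < (trS j.+2 x y z)%:RR by rewrite ltr0z.
rewrite hN in hL.
move: hL hpN hqN hp' hq'.
move: (trS j.+1 x y z)%:RR (trS j.+2 x y z)%:RR => p q hL hpN hqN hp' hq'.
have /andP[p1 p2] := phi_bounds.
have hx' : 0 < x%:RR by rewrite ltr0z.
have hy' : 0 < y%:RR by rewrite ltr0z.
have hz' : 0 < z%:RR by rewrite ltr0z.
set P := phi ^+ j.+1 in hL *.
have hP : 0 < P by rewrite /P exprn_gt0 // (lt_trans _ (phi_gt1)).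
have hup : LL p q N%:RR <= (1 + phi ^+ 2) * N%:RR.
  rewrite /LL; set g := phi ^+ 2 - phi.
  have hg : 1 <= g by rewrite /g expr2; nra.
  have e : 1 + phi ^+ 2 = 1 + g + phi by rewrite /g; ring.
  rewrite e; nra.
have hlo1 : x%:RR <= LL x%:RR y%:RR z%:RR.
  rewrite /LL; have hg : 1 <= phi ^+ 2 - phi by rewrite expr2; nra.
  nra.
have hlo2 : y%:RR <= LL x%:RR y%:RR z%:RR.
  rewrite /LL; have hg : 1 <= phi ^+ 2 - phi by rewrite expr2; nra.
  nra.
split.
- apply: (le_trans _ hup); rewrite hL mulrC; apply: ler_wpM2l => //; exact: ltW.
- apply: (le_trans _ hup); rewrite hL mulrC; apply: ler_wpM2l => //; exact: ltW.
Qed.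

Lemma floor_close (a b : R) : Num.floor a = Num.floor b -> `|a - b| < 1.
Proof.
move=> e.
have /andP[a1 a2] := floor_itv a.
have /andP[b1 b2] := floor_itv b.
rewrite e intrD in a1 a2; rewrite intrD in b2.
rewrite ltr_norml; apply/andP; split; lra.
Qed.

End S.

Lemma nat_aux j : (3 * j.+4 = j.+1 * 2 + j.+1 + 9)%N.
Proof. lia. Qed.

Unset Implicit Arguments.

Theorem theorem2 (R : realType) (phi : R)
  (hphi : phi ^+ 3 = phi ^+ 2 + phi + 1)
  (n k : nat) (hn : (0 < n)%N) (hk : (4 <= k)%N) :
  forall L : seq (seq int), uniq L ->
    (forall s, s \in L -> pos_trib_ending k (n%:Z) s) ->
    ((size L)%:Z <= (Num.ceil (1500 * n%:R / Num.sqrt (phi ^+ (3 * k)))) ^+ 2).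
Proof.
move=> L uL hL.
have [j ek] : exists j, k = j.+4 by exists (k - 4)%N; lia.
subst k.
have hphi1 := phi_gt1 hphi.
have hphi0 : 0 < phi by apply: lt_trans hphi1.
set r := Num.sqrt (phi ^+ (3 * j.+4)).
have hr : 0 < r by rewrite sqrtr_gt0 exprn_gt0.
have hr2 : r ^+ 2 = phi ^+ (3 * j.+4) by rewrite sqr_sqrtr // exprn_ge0 // ltW.
have hn' : 0 < n%:R :> R by rewrite ltr0n.
set X := 1500 * n%:R / r.
have hX : 0 < X by rewrite divr_gt0 // mulr_gt0.
set m := Num.ceil X.
have hmX : X <= m%:~R := ceil_ge X.
have hm : 0 < m%:~R :> R by apply: lt_le_trans hmX.
have hm0 : 0 <= m by rewrite -(ler0z R) ltW.
set P := phi ^+ j.+1.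
have hP : 0 < P by rewrite exprn_gt0.
set D := (1 + phi ^+ 2) * n%:R / P.
have hD : 0 < D by rewrite divr_gt0 // mulr_gt0 // ltr_wpDr // sqr_ge0.
have DP : D * P = (1 + phi ^+ 2) * n%:R by rewrite /D mulfVK // gt_eqF.
set cf := fun (t : int) => Num.floor ((t - 1)%:~R * m%:~R / D).
set cellf := fun s : seq int => (absz (cf s`_0), absz (cf s`_1)).
have facts : forall s, s \in L ->
    [/\ size s = j.+4, forall i, (i < j.+4)%N -> s`_i = trS i s`_0 s`_1 s`_2,
        0 < s`_0, 0 < s`_1 & 0 < s`_2] /\ trS j.+3 s`_0 s`_1 s`_2 = n%:Z.
  move=> s /hL [[hs hrec] [[h0 [h1 h2]] hlast]].
  have ht := seq_trS (conj hs hrec).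
  split; first by split.
  by rewrite -ht.
have crng : forall t : int, 0 < t -> t%:~R * P <= (1 + phi ^+ 2) * n%:R ->
    0 <= cf t /\ cf t < m.
  move=> t ht hb.
  have htD : t%:~R <= D by rewrite -(ler_pM2r hP) DP.
  have h1 : 0 <= (t - 1)%:~R :> R by rewrite ler0z; lia.
  have h2 : (t - 1)%:~R < D by rewrite intrB; lra.
  split.
    rewrite /cf floor_ge0; apply: divr_ge0; last exact: ltW.
    by apply: mulr_ge0 => //; exact: ltW.
  rewrite /cf floor_lt_int ltr_pdivrMr // mulrC.
  by rewrite ltr_pM2l.
have cclose : forall t t' : int, cf t = cf t' -> `|(t - t')%:~R| <= D / m%:~R :> R.
  move=> t t' e.
  have := floor_close e.
  have -> : (t - 1)%:~R * m%:~R / D - (t' - 1)%:~R * m%:~R / D = (t - t')%:~R * (m%:~R / D) :> R.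
    by rewrite !intrB; ring.
  rewrite normrM (gtr0_norm (divr_gt0 hm hD)) => h.
  rewrite ler_pdivlMr // ltW //.
  by move: h; rewrite mulrA ltr_pdivrMr // mul1r.
set M := `|m|%N.
have em : m = M%:Z by rewrite /M gez0_abs.
have hsub : {subset map cellf L <= [seq (a, b) | a <- iota 0 M, b <- iota 0 M]}.
  move=> c /mapP [s hs ->].
  have [[_ _ h0 h1 h2] hN] := facts s hs.
  have [b0 b1] := abound hphi h0 h1 h2 hN.
  have [c0 c0'] := crng _ h0 b0.
  have [c1 c1'] := crng _ h1 b1.
  by apply: allpairs_f; rewrite mem_iota add0n /= -ltz_nat gez0_abs // -em.
have hinj : {in L &, injective cellf}.
  move=> s s' hs hs' hce.
  have [[sz hrec h0 h1 h2] hN] := facts s hs.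
  have [[sz' hrec' h0' h1' h2'] hN'] := facts s' hs'.
  have [b0 b1] := abound hphi h0 h1 h2 hN.
  have [b0' b1'] := abound hphi h0' h1' h2' hN'.
  have [c0 _] := crng _ h0 b0; have [c1 _] := crng _ h1 b1.
  have [c0' _] := crng _ h0' b0'; have [c1' _] := crng _ h1' b1'.
  case: hce => e0 e1.
  have f0 : cf s`_0 = cf s'`_0 by rewrite -(gez0_abs c0) -(gez0_abs c0') e0.
  have f1 : cf s`_1 = cf s'`_1 by rewrite -(gez0_abs c1) -(gez0_abs c1') e1.
  have h00 : trS j.+3 (s`_0 - s'`_0) (s`_1 - s'`_1) (s`_2 - s'`_2) = 0.
    by rewrite trS_sub hN hN' subrr.
  case: (boolP [&& s`_0 - s'`_0 == 0, s`_1 - s'`_1 == 0 & s`_2 - s'`_2 == 0]) => hz.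
    case/and3P: hz; rewrite !subr_eq0 => /eqP ex /eqP ey /eqP ez.
    apply: (@eq_from_nth _ 0); first by rewrite sz sz'.
    by move=> i; rewrite sz => hi; rewrite hrec // hrec' // ex ey ez.
  exfalso.
  have hd0 : 0 <= D / m%:~R by rewrite divr_ge0 // ltW.
  apply: (final_contra hphi hd0 _ (close_bound hphi h00 hz (cclose _ _ f0) (cclose _ _ f1))).
  set d := D / m%:~R.
  have dm : d * m%:~R = D by rewrite /d mulfVK // gt_eqF.
  have s1 : 1500 * n%:R <= m%:~R * r by rewrite -ler_pdivrMr.
  have s2 : d * (1500 * n%:R) <= D * r.
    by rewrite -dm -mulrA; apply: ler_wpM2l.
  have s3 : (d * (1500 * n%:R)) ^+ 2 <= (D * r) ^+ 2.
    have n1 : 0 <= d * (1500 * n%:R).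
      by apply: mulr_ge0 => //; apply: mulr_ge0 => //; exact: ltW.
    by apply: lerXn2r => //; rewrite nnegrE //; exact: le_trans n1 s2.
  have ee1 : phi ^+ (3 * j.+4) = P ^+ 2 * P * phi ^+ 9.
    by rewrite /P -exprM -!exprD nat_aux.
  have ee2 : (D * r) ^+ 2 = ((1 + phi ^+ 2) ^+ 2 * P * phi ^+ 9) * n%:R ^+ 2.
    rewrite exprMn hr2 ee1.
    have -> : D ^+ 2 * (P ^+ 2 * P * phi ^+ 9) = (D * P) ^+ 2 * P * phi ^+ 9 by ring.
    by rewrite DP; ring.
  have ee3 : (d * (1500 * n%:R)) ^+ 2 = (d ^+ 2 * 1500 ^+ 2) * n%:R ^+ 2 by ring.
  rewrite ee2 ee3 in s3.
  by rewrite -(ler_pM2r (exprn_gt0 2 hn')).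
have := uniq_leq_size (etrans (map_inj_in_uniq hinj) uL) hsub.
rewrite size_map size_allpairs !size_iota => hle.
by rewrite em expr2 -PoszM lez_nat.
Qed.
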